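(* Let $d \ge 1$, $\rho \ge 0$, and let $r^{(1)}, \dots, r^{(\rho)} \in (0,1)^d$ be pairwise incomparable points such that for each $j \in [d]$ the values $r^{(i)}_j$, $i \in [\rho]$, are distinct. Then the number $\gamma$ of generators of their record-setting region satisfies $$\gamma \le \binom{\rho + d - 1}{d-1}.$$
   Context: For $x,y \in \mathbb{R}^d$, $x \prec y$ means $x_j < y_j$ for all $j \in [d]$, and $x \le y$ means $x_j \le y_j$ for all $j$. The record-setting region of points $r^{(1)},\dots,r^{(\rho)}$ is $S := \{x \in [0,1)^d : x \not\prec r^{(i)} \text{ for all } i \in [\rho]\}$, and its generators are the minimal elements of $S$ with respect to $\le$. *)

(* Defs.v *)
From HB Require Import structures.
From mathcomp Require Import all_boot all_order all_algebra.
Set Implicit Arguments. Unset Strict Implicit. Unset Printing Implicit Defensive.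
Import Order.TTheory GRing.Theory Num.Theory.
Local Open Scope ring_scope.

Definition vlt (R : realFieldType) (d : nat) (x y : 'rV[R]_d) : bool :=
  [forall j : 'I_d, x ord0 j < y ord0 j].

Definition vle (R : realFieldType) (d : nat) (x y : 'rV[R]_d) : bool :=
  [forall j : 'I_d, x ord0 j <= y ord0 j].

Definition in_open_cube (R : realFieldType) (d : nat) (x : 'rV[R]_d) : bool :=
  [forall j : 'I_d, (0 < x ord0 j) && (x ord0 j < 1)].

Definition in_halfopen_cube (R : realFieldType) (d : nat) (x : 'rV[R]_d) : bool :=
  [forall j : 'I_d, (0 <= x ord0 j) && (x ord0 j < 1)].

Definition record_region (R : realFieldType) (d rho : nat)
    (r : 'I_rho -> 'rV[R]_d) (x : 'rV[R]_d) : bool :=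
  in_halfopen_cube x && [forall i : 'I_rho, ~~ vlt x (r i)].

Definition generator (R : realFieldType) (d rho : nat)
    (r : 'I_rho -> 'rV[R]_d) (x : 'rV[R]_d) : Prop :=
  record_region r x /\
  (forall y : 'rV[R]_d, record_region r y -> vle y x -> y = x).

(* Main.v *)
Require Import Defs.
From HB Require Import structures.
From mathcomp Require Import all_boot all_order all_algebra zify.
Import Order.TTheory GRing.Theory Num.Theory.
Local Open Scope ring_scope.
Section S.
Variables (R : realFieldType) (d rho : nat) (r : 'I_rho -> 'rV[R]_d).

Lemma witness x (j : 'I_d) : generator r x -> 0 < x ord0 j ->
  exists k, x ord0 j = r k ord0 j /\ forall l, l != j -> x ord0 l < r k ord0 l.
Proof.
move=> [Sx minx] xj0.
set A := fun i => [forall l, (l != j) ==> (x ord0 l < r i ord0 l)].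
case: (boolP [exists k, (x ord0 j == r k ord0 j) && A k]) => [/existsP [k /andP [/eqP e /forallP Ak]]|Hn].
  by exists k; split=> // l lj; move: (Ak l); rewrite lj.
have Alt : forall i, A i -> r i ord0 j < x ord0 j.
  move=> i Ai; move: Sx => /andP [_ /forallP /(_ i)].
  rewrite /vlt negb_forall => /existsP [l].
  case: (eqVneq l j) => [->|lj]; last first.
    by move: Ai => /forallP /(_ l); rewrite lj /= => ->.
  rewrite -leNgt le_eqVlt => /orP [/eqP e|//].
  by move: Hn; rewrite negb_exists => /forallP /(_ i); rewrite e eqxx Ai.
set z := \big[Num.max/0]_(i | A i) r i ord0 j.
have z0 : 0 <= z by apply: (big_rec (fun v => 0 <= v)) => // i v _ hv; rewrite le_max hv orbT.
have zlt : z < x ord0 j.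
  apply: (big_rec (fun v => v < x ord0 j)) => // i v Ai hv.
  by rewrite gt_max hv Alt.
have zge : forall i, A i -> r i ord0 j <= z.
  by move=> i Ai; rewrite /z (bigD1 i) //= le_max lexx.
set y := \row_l (if l == j then z else x ord0 l).
have yE : forall l, y ord0 l = if l == j then z else x ord0 l by move=> l; rewrite mxE.
have Sy : record_region r y.
  apply/andP; split.
    apply/forallP => l; rewrite yE; case: eqP => [_|_].
      rewrite z0 /=; apply: (lt_trans zlt).
      by move: Sx => /andP [/forallP /(_ j) /andP [_ ->] _].
    by move: Sx => /andP [/forallP /(_ l) -> _].
  apply/forallP => i; rewrite /vlt negb_forall.
  case Ai: (A i).
    by apply/existsP; exists j; rewrite yE eqxx -leNgt zge.
  move: Ai => /negbT; rewrite negb_forall => /existsP [l]; rewrite negb_imply => /andP [lj H].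
  by apply/existsP; exists l; rewrite yE (negbTE lj).
have yx : vle y x.
  apply/forallP => l; rewrite yE; case: (eqVneq l j) => [->|_]; last by [].
  exact: ltW.
have := minx y Sy yx => /(congr1 (fun m : 'rV_d => m ord0 j)).
by rewrite yE eqxx => e; move: zlt; rewrite e ltxx.
Qed.

Definition cnt (x : 'rV[R]_d) (j : nat) : nat :=
  #|[set i : 'I_rho | [forall l : 'I_d, (j <= l)%N ==> (x ord0 l < r i ord0 l)]]|.

Lemma cnt_mono x : {homo cnt x : a b / (a <= b)%N}.
Proof.
move=> a b ab; apply: subset_leq_card; apply/subsetP => i; rewrite !inE.
move=> /forallP H; apply/forallP => l; apply/implyP => bl.
by move: (H l); rewrite (leq_trans ab bl).
Qed.

Lemma cnt_le x j : (cnt x j <= rho)%N.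
Proof. by rewrite /cnt (leq_trans (max_card _)) // card_ord. Qed.

Lemma cnt0 x : generator r x -> cnt x 0 = 0%N.
Proof.
move=> [/andP [_ /forallP H] _]; apply/eqP; rewrite cards_eq0; apply/eqP.
apply/setP => i; rewrite !inE; apply/negbTE; move: (H i); apply: contra.
by move=> /forallP H'; apply/forallP => l; move: (H' l).
Qed.

Lemma determ x y (j : 'I_d) : generator r x -> generator r y ->
  (forall l : 'I_d, (j < l)%N -> x ord0 l = y ord0 l) ->
  cnt x j = cnt y j -> x ord0 j = y ord0 j.
Proof.
wlog: x y / x ord0 j <= y ord0 j.
  move=> W Gx Gy E C; case: (leP (x ord0 j) (y ord0 j)) => h; first exact: W.
  by symmetry; apply: (W y x (ltW h)) => // l jl; rewrite E.
rewrite le_eqVlt => /orP [/eqP //|xy] Gx Gy E C.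
have y0 : 0 < y ord0 j.
  apply: le_lt_trans xy; case: Gx => /andP [/forallP /(_ j) /andP [] ] //.
have [k [ek hk]] := @witness y j Gy y0.
have: (cnt y j < cnt x j)%N; last by rewrite C ltnn.
apply: proper_card; apply/properP; split.
  apply/subsetP => i; rewrite !inE => /forallP H; apply/forallP => l; apply/implyP => jl.
  move: (H l); rewrite jl /=; case: (eqVneq l j) => [->|lj] h.
    exact: lt_trans xy h.
  by rewrite E //; rewrite ltn_neqAle jl andbT; apply: contra lj => /eqP /val_inj ->.
exists k; rewrite !inE.
  apply/forallP => l; apply/implyP => jl; case: (eqVneq l j) => [->|lj].
    by rewrite -ek.
  rewrite E; last by rewrite ltn_neqAle jl andbT; apply: contra lj => /eqP /val_inj ->.
  exact: hk.
by rewrite negb_forall; apply/existsP; exists j; rewrite leqnn /= -ek ltxx.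
Qed.

End S.

Lemma gen_inj (R : realFieldType) d rho (r : 'I_rho -> 'rV[R]_d) x y :
  generator r x -> generator r y ->
  (forall j : nat, (0 < j < d)%N -> @cnt _ _ _ r x j = @cnt _ _ _ r y j) -> x = y.
Proof.
move=> Gx Gy C.
suff H : forall k, forall l : 'I_d, (d - k <= l)%N -> x ord0 l = y ord0 l.
  by apply/rowP => l; apply: (H d); rewrite subnn.
elim=> [|k IH] l hl.
  by move: (ltn_ord l); rewrite ltnNge (leq_trans _ hl) // subn0.
case: (leqP (d - k) l) => hk; first exact: IH.
have el : nat_of_ord l = (d - k.+1)%N.
  by move: hk hl (ltn_ord l); lia.
apply: (@determ _ _ _ r x y l Gx Gy).
  by move=> l' ll'; apply: IH; move: ll' (ltn_ord l'); rewrite el; lia.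
case: (posnP l) => [l0|lp]; first by rewrite l0 !cnt0.
by apply: C; rewrite lp ltn_ord.
Qed.

Theorem theoremT (R : realFieldType) (d rho : nat) (r : 'I_rho -> 'rV[R]_d) :
  (0 < d)%N ->
  (forall i : 'I_rho, in_open_cube (r i)) ->
  (forall i k : 'I_rho, i != k -> ~~ vle (r i) (r k)) ->
  (forall j : 'I_d, injective (fun i : 'I_rho => r i ord0 j)) ->
  forall gens : seq 'rV[R]_d,
    uniq gens -> (forall x, x \in gens -> generator r x) ->
    (size gens <= 'C(rho + d - 1, d - 1))%N.
Proof.
move=> d0 _ _ _ gens ug Gg.
pose f (x : 'rV[R]_d) : (d - 1).-tuple 'I_rho.+1 :=
  [tuple (inord (@cnt _ _ _ r x i.+1) : 'I_rho.+1) | i < d - 1].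
have finj : {in gens &, injective f}.
  move=> x y xg yg fe; apply: gen_inj; [exact: Gg | exact: Gg |].
  move=> j /andP [j0 jd].
  have hi : (j.-1 < d - 1)%N by rewrite -subn1 ltn_sub2r // (leq_trans _ jd).
  have := congr1 (fun t => val (tnth t (Ordinal hi))) fe.
  rewrite !tnth_mktuple /= !inordK ?ltnS ?cnt_le //.
  by rewrite prednK.
rewrite -addnBA // addnC -card_sorted_tuples -(size_map f).
rewrite -(card_uniqP (etrans (map_inj_in_uniq finj) ug)).
apply: subset_leq_card; apply/subsetP => t /mapP [x _ ->]; rewrite inE /=.
rewrite -map_comp.
have -> : [seq (val \o (fun i : 'I_(d - 1) => (inord (@cnt _ _ _ r x i.+1) : 'I_rho.+1))) i | i <- enum 'I_(d - 1)]
  = [seq @cnt _ _ _ r x k.+1 | k <- map val (enum 'I_(d - 1))].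
  by rewrite -map_comp; apply: eq_map => i /=; rewrite inordK // ltnS cnt_le.
rewrite val_enum_ord; apply: homo_sorted; last exact: iota_sorted.
by move=> a b ab; apply: cnt_mono.
Qed.
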